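(* For all $k,l\in\mathbb{Z}$ and all $0<\xi<1$, $s_{k,l}(\xi)>0$.
   Context: For $0<\xi<1$ let $\mu_\xi(\varphi):=\xi^{-2}+(1-\xi^{-2})\cos\varphi$ and define $s_{k,l}(\xi):=\int_0^{2\pi}\int_0^{2\pi}\frac{e^{-ik\varphi}e^{-il\eta}}{(\mu_\xi(\varphi)-\cos\eta)^{1/2}}\,d\eta\,d\varphi$ for $k,l\in\mathbb{Z}$. *)

(* Defs.v *)
From Stdlib Require Import Reals Lra ZArith.
Open Scope R_scope.

Definition mu (xi phi : R) : R := / (xi ^ 2) + (1 - / (xi ^ 2)) * cos phi.

(* e^{-ik phi} e^{-il eta} = cos(k phi + l eta) - i sin(k phi + l eta);
   real and imaginary parts of the integrand of s_{k,l}(xi). *)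
Definition integrand_re (k l : Z) (xi phi eta : R) : R :=
  cos (IZR k * phi + IZR l * eta) / sqrt (mu xi phi - cos eta).
Definition integrand_im (k l : Z) (xi phi eta : R) : R :=
  - sin (IZR k * phi + IZR l * eta) / sqrt (mu xi phi - cos eta).

Definition is_RInt (f : R -> R) (a b v : R) : Prop :=
  exists pr : Riemann_integrable f a b, RiemannInt pr = v.

(* Iterated integral  int_0^{2pi} int_0^{2pi} F phi eta d eta d phi = v,
   where the inner integral is a proper Riemann integral for each
   phi in (0, 2pi) and the outer one is improper at both endpoints
   (the integrand of s_{k,l} is singular only at phi = eta = 0 mod 2pi). *)
Definition iter_int (F : R -> R -> R) (v : R) : Prop :=
  exists I : R -> R,
    (forall phi, 0 < phi < 2 * PI -> is_RInt (F phi) 0 (2 * PI) (I phi)) /\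
    (forall eps, 0 < eps ->
       exists delta, 0 < delta /\
         forall a b, 0 < a < delta -> 0 < 2 * PI - b < delta ->
           exists J, is_RInt I a b J /\ Rabs (J - v) < eps).

(* Main.v *)
Require Import Defs.
From Stdlib Require Import Reals ZArith Lra Lia Psatz.
From Coquelicot Require Import Coquelicot.
Open Scope R_scope.

Ltac toR := match goal with |- @eq _ ?a ?b => change (@eq R a b) end.


Lemma sumn_S (a : nat -> R) n : sum_n a (S n) = sum_n a n + a (S n).
Proof. rewrite sum_Sn. reflexivity. Qed.

Lemma tail_bound (a M : nat -> R) N :
  (forall n, Rabs (a n) <= M n) -> ex_series M ->
  ex_series a /\ Rabs (Series a - sum_n a N) <= Series M - sum_n M N.
Proof.
  intros Ha HM.
  assert (Hea : ex_series a).
  { apply (ex_series_le a M); auto. }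
  split; auto.
  assert (Hj : forall j, Rabs (sum_n a (N + j) - sum_n a N) <= sum_n M (N + j) - sum_n M N).
  { induction j.
    - rewrite Nat.add_0_r. rewrite Rminus_diag, Rabs_R0. lra.
    - rewrite Nat.add_succ_r, !sumn_S.
      specialize (Ha (S (N + j))).
      pose proof (Rabs_triang (sum_n a (N + j) - sum_n a N) (a (S (N + j)))).
      replace (sum_n a (N + j) + a (S (N + j)) - sum_n a N) with
        (sum_n a (N + j) - sum_n a N + a (S (N + j))) by ring.
      lra. }
  apply Series_correct in Hea. apply Series_correct in HM.
  assert (L1 : is_lim_seq (fun j => Rabs (sum_n a (N + j) - sum_n a N)) (Rabs (Series a - sum_n a N))).
  { apply (is_lim_seq_abs _ (Series a - sum_n a N)).
    apply (is_lim_seq_minus _ _ (Series a) (sum_n a N)).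
    - eapply is_lim_seq_ext with (fun n => sum_n a (n + N)).
      { intros n. f_equal. lia. }
      apply (proj1 (is_lim_seq_incr_n (fun j => sum_n a j) N _)). exact Hea.
    - apply is_lim_seq_const.
    - reflexivity. }
  assert (L2 : is_lim_seq (fun j => sum_n M (N + j) - sum_n M N) (Series M - sum_n M N)).
  { apply (is_lim_seq_minus _ _ (Series M) (sum_n M N)).
    - eapply is_lim_seq_ext with (fun n => sum_n M (n + N)).
      { intros n. f_equal. lia. }
      apply (proj1 (is_lim_seq_incr_n (fun j => sum_n M j) N _)). exact HM.
    - apply is_lim_seq_const.
    - reflexivity. }
  pose proof (is_lim_seq_le _ _ _ _ Hj L1 L2). simpl in H. exact H.
Qed.

Definition clamp (lo hi t : R) := Rmax lo (Rmin hi t).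
Lemma clamp_id lo hi t : lo <= t <= hi -> clamp lo hi t = t.
Proof. intros. unfold clamp. rewrite Rmin_right by lra. rewrite Rmax_right; lra. Qed.
Lemma clamp_in lo hi t : lo <= hi -> lo <= clamp lo hi t <= hi.
Proof. intros. unfold clamp. unfold Rmax, Rmin. repeat destruct Rle_dec; lra. Qed.

Lemma is_RInt_sum_n (a : nat -> R -> R) lo hi v N :
  (forall n, is_RInt (a n) lo hi (v n)) ->
  is_RInt (fun t => sum_n (fun n => a n t) N) lo hi (sum_n v N).
Proof.
  intros H. induction N.
  - rewrite sum_O. eapply is_RInt_ext; [|apply H]. intros. rewrite sum_O. reflexivity.
  - rewrite sum_Sn. eapply is_RInt_ext; [|apply is_RInt_plus; [apply IHN| apply H]].
    intros. simpl. rewrite sum_Sn. reflexivity.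
Qed.

Lemma seq_eps (u : nat -> R) (l : R) : is_lim_seq u l ->
  forall eps, 0 < eps -> exists N, forall n, (N <= n)%nat -> Rabs (u n - l) < eps.
Proof.
  intros H eps Heps. apply is_lim_seq_spec in H. unfold is_lim_seq' in H.
  destruct (H (mkposreal eps Heps)) as [N HN]. exists N. intros. apply HN. lia.
Qed.

Lemma is_RInt_series (a : nat -> R -> R) (M : nat -> R) lo hi (v : nat -> R) :
  lo <= hi ->
  (forall n t, lo <= t <= hi -> Rabs (a n t) <= M n) ->
  ex_series M ->
  (forall n, is_RInt (a n) lo hi (v n)) ->
  is_series v (Series v) /\ is_RInt (fun t => Series (fun n => a n t)) lo hi (Series v).
Proof.
  intros Hlh Hb HM Hv.
  set (b := fun n t => a n (clamp lo hi t)).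
  assert (Hbv : forall n, is_RInt (b n) lo hi (v n)).
  { intros n. eapply is_RInt_ext; [|apply Hv]. intros x Hx.
    rewrite Rmin_left in Hx by lra. rewrite Rmax_right in Hx by lra.
    unfold b. rewrite clamp_id by lra. reflexivity. }
  set (f := fun N t => sum_n (fun n => b n t) N).
  set (g := fun t => Series (fun n => b n t)).
  assert (Hf : forall N, is_RInt (f N) lo hi (sum_n v N)).
  { intros N. apply is_RInt_sum_n. exact Hbv. }
  assert (Hlim : filterlim f eventually (locally (g : fct_UniformSpace R R_CompleteNormedModule))).
  { intros P [eps Heps].
    assert (HMs := Series_correct _ HM).
    destruct (seq_eps _ _ HMs eps (cond_pos eps)) as [N0 HN0].
    exists N0. intros N HN. apply Heps. intros t.
    destruct (tail_bound (fun n => b n t) M N) as [_ Ht].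
    { intros n. unfold b. apply Hb. apply clamp_in. lra. }
    { exact HM. }
    specialize (HN0 N HN).
    change (Rabs (f N t - g t) < eps).
    unfold f, g. cbv beta. rewrite Rabs_minus_sym.
    pose proof (Rle_abs (Series M - sum_n M N)). rewrite Rabs_minus_sym in HN0. eapply Rle_lt_trans; [exact Ht|]. eapply Rle_lt_trans; [exact H| exact HN0]. }
  destruct (filterlim_RInt f lo hi eventually _ g (sum_n v) Hf Hlim) as [If [H1 H2]].
  assert (Hs : is_series v If) by exact H1.
  rewrite (is_series_unique _ _ Hs). split; auto.
  eapply is_RInt_ext; [|exact H2]. intros x Hx.
  rewrite Rmin_left in Hx by lra. rewrite Rmax_right in Hx by lra.
  unfold g, b. rewrite clamp_id by lra. reflexivity.
Qed.


Lemma RInt_lin2 (f1 f2 : R -> R) a b c1 c2 : ex_RInt f1 a b -> ex_RInt f2 a b ->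
  RInt (fun t => c1 * f1 t + c2 * f2 t) a b = c1 * RInt f1 a b + c2 * RInt f2 a b.
Proof.
  intros H1 H2. apply is_RInt_unique.
  apply (is_RInt_plus (fun t => c1 * f1 t) (fun t => c2 * f2 t)).
  - apply (is_RInt_scal f1 a b c1). exact (@RInt_correct R_CompleteNormedModule f1 a b H1).
  - apply (is_RInt_scal f2 a b c2). exact (@RInt_correct R_CompleteNormedModule f2 a b H2).
Qed.

Lemma RInt_refl_zero (g : R -> R) : ex_RInt g 0 (2*PI) ->
  (forall t, g (2*PI - t) = - g t) -> RInt g 0 (2*PI) = 0.
Proof.
  intros Hg Hs.
  assert (H := RInt_comp_lin g (-1) (2*PI) 0 (2*PI)).
  replace (-1 * 0 + 2*PI) with (2*PI) in H by ring.
  replace (-1 * (2*PI) + 2*PI) with 0 in H by ring.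
  rewrite <- (opp_RInt_swap g 0 (2*PI) Hg) in H.
  rewrite (RInt_ext _ g) in H.
  2:{ intros x _. replace (-1 * x + 2*PI) with (2*PI - x) by ring.
    rewrite Hs. unfold scal; simpl. unfold mult; simpl. ring. }
  unfold opp in H; simpl in H. specialize (H (ex_RInt_swap _ _ _ Hg)). lra.
Qed.

Lemma ex_cont (f : R -> R) a b : (forall z, Rmin a b <= z <= Rmax a b -> continuous f z) -> ex_RInt f a b.
Proof. exact (@ex_RInt_continuous R_CompleteNormedModule f a b). Qed.

Lemma cont_der (f : R -> R) x : ex_derive f x -> continuous f x.
Proof. exact (@ex_derive_continuous R_AbsRing R_NormedModule f x). Qed.

Lemma RInt_ftc (F f : R -> R) a b :
  (forall x, Rmin a b <= x <= Rmax a b -> is_derive F x (f x)) ->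
  (forall x, Rmin a b <= x <= Rmax a b -> continuous f x) -> is_RInt f a b (F b - F a).
Proof. intros H1 H2. exact (@is_RInt_derive R_CompleteNormedModule F f a b H1 H2). Qed.

Definition Ek (m : nat) (k : Z) : R := RInt (fun t => cos (IZR k * t) * cos t ^ m) 0 (2*PI).

Lemma ex_Ek m k : ex_RInt (fun t => cos (IZR k * t) * cos t ^ m) 0 (2*PI).
Proof. apply ex_cont. intros z _. apply cont_der. auto_derive. auto. Qed.

Lemma Ek_0 k : Ek 0 k = if Z.eq_dec k 0 then 2*PI else 0.
Proof.
  unfold Ek. destruct (Z.eq_dec k 0).
  - subst. rewrite (RInt_ext _ (fun _ => 1)). rewrite RInt_const. unfold scal; simpl; unfold mult; simpl; ring.
    intros. simpl. rewrite Rmult_0_l, cos_0. ring.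
  - assert (Hk : IZR k <> 0) by (apply not_0_IZR; auto).
    apply is_RInt_unique.
    assert (H := RInt_ftc (fun t => sin (IZR k * t) / IZR k) (fun t => cos (IZR k * t) * cos t ^ 0) 0 (2*PI)).
    cbv beta in H. rewrite Rmult_0_r, sin_0 in H. rewrite sin_eq_0_1 in H.
    2:{ exists (2*k)%Z. rewrite mult_IZR. ring. }
    assert (E0 : 0 / IZR k - 0 / IZR k = 0) by (field; auto). rewrite E0 in H.
    apply H.
    * intros x _. auto_derive. auto. field_simplify; auto. 
    * intros x _. apply cont_der. auto_derive. auto.
Qed.

Lemma Ek_S m k : Ek (S m) k = / 2 * Ek m (k + 1) + / 2 * Ek m (k - 1).
Proof.
  unfold Ek. rewrite <- RInt_lin2 by apply ex_Ek.
  apply RInt_ext. intros x _. rewrite plus_IZR, minus_IZR. simpl pow.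
  replace ((IZR k + 1) * x) with (IZR k * x + x) by ring.
  replace ((IZR k - 1) * x) with (IZR k * x - x) by ring.
  rewrite cos_plus, cos_minus. match goal with |- ?a = ?b => change (@eq R a b) end; field.
Qed.

Lemma Ek_opp m k : Ek m (- k) = Ek m k.
Proof.
  unfold Ek. apply RInt_ext. intros x _. rewrite opp_IZR.
  replace (- IZR k * x) with (- (IZR k * x)) by ring. rewrite cos_neg. reflexivity.
Qed.

Lemma Ek_nonneg m : forall k, 0 <= Ek m k.
Proof.
  induction m; intros k.
  - rewrite Ek_0. destruct Z.eq_dec; [pose proof PI_RGT_0; lra | lra].
  - rewrite Ek_S. specialize (IHm (k+1)%Z) as H1. specialize (IHm (k-1)%Z). lra.
Qed.

Lemma Ek_diag n : 0 < Ek n (Z.of_nat n).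
Proof.
  induction n.
  - rewrite Ek_0. simpl. pose proof PI_RGT_0; lra.
  - rewrite Ek_S. pose proof (Ek_nonneg n (Z.of_nat (S n) + 1)).
    replace (Z.of_nat (S n) - 1)%Z with (Z.of_nat n) by lia. lra.
Qed.

Lemma Ek_abs k : 0 < Ek (Z.abs_nat k) k.
Proof.
  destruct (Z_le_gt_dec 0 k).
  - assert (E : k = Z.of_nat (Z.abs_nat k)) by lia. rewrite E at 2. apply Ek_diag.
  - assert (E : k = (- Z.of_nat (Z.abs_nat k))%Z) by lia. rewrite E at 2. rewrite Ek_opp. apply Ek_diag.
Qed.


Fixpoint cc (n : nat) : R := match n with 0%nat => 1 | S n => cc n * (2 * INR n + 1) / (2 * INR n + 2) end.

Lemma cc_S n : cc (S n) = cc n * (2 * INR n + 1) / (2 * INR n + 2).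
Proof. reflexivity. Qed.

Lemma cc_pos n : 0 < cc n.
Proof. induction n; simpl. lra. pose proof (pos_INR n). apply Rdiv_lt_0_compat; nra. Qed.

Lemma cc_decr n : cc (S n) <= cc n.
Proof. rewrite cc_S. pose proof (pos_INR n). pose proof (cc_pos n).
  apply Rmult_le_reg_r with (2 * INR n + 2). lra. field_simplify; nra. Qed.

Lemma cc_le1 n : cc n <= 1.
Proof. induction n. simpl; lra. pose proof (cc_decr n); lra. Qed.

Lemma cc_sq n : cc n ^ 2 * (INR n + 1) <= 1.
Proof.
  induction n. simpl. lra.
  rewrite cc_S. rewrite S_INR. pose proof (pos_INR n) as Hn. set (x := INR n) in *.
  set (c := cc n) in *.
  replace ((c * (2 * x + 1) / (2 * x + 2)) ^ 2 * (x + 1 + 1))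
    with ((c^2 * (2*x+1)^2 * (x+2)) / (2*x+2)^2) by (field; lra).
  apply Rmult_le_reg_r with ((2*x+2)^2). nra.
  unfold Rdiv. rewrite Rmult_assoc, Rinv_l, Rmult_1_r, Rmult_1_l by nra.
  assert (H1 : c^2 * (x+1) * ((2*x+1)^2 * (x+2)) <= (2*x+1)^2 * (x+2)).
  { assert (0 <= (2*x+1)^2 * (x+2)) by nra. nra. }
  assert (H2 : (2*x+1)^2 * (x+2) <= (2*x+2)^2 * (x+1)) by nra.
  assert (H3 : c^2 * (2*x+1)^2 * (x+2) * (x+1) <= (2*x+2)^2 * (x+1)) by nra.
  apply Rmult_le_reg_r with (x+1). lra. lra.
Qed.

Lemma cc_radius : Rbar_le 1 (CV_radius cc).
Proof.
  destruct (CV_radius_bounded cc) as [Hub _]. apply Hub.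
  exists 1. intros n. rewrite pow1, Rmult_1_r. rewrite Rabs_right. apply cc_le1.
  left; apply cc_pos.
Qed.

Lemma cc_inside x : Rabs x < 1 -> Rbar_lt (Rabs x) (CV_radius cc).
Proof.
  intros H. pose proof cc_radius. destruct (CV_radius cc); simpl in *; auto; lra.
Qed.

Definition SS (x : R) := PSeries cc x.

Lemma SS_deriv_id x : Rabs x < 1 ->
  PSeries (PS_derive cc) x - x * PSeries (PS_derive cc) x = / 2 * SS x.
Proof.
  intros Hx.
  assert (Hd : ex_pseries (PS_derive cc) x).
  { apply CV_radius_inside. rewrite CV_radius_derive. apply cc_inside; auto. }
  assert (Hi : ex_pseries (PS_incr_1 (PS_derive cc)) x).
  { apply CV_radius_inside. rewrite CV_radius_incr_1, CV_radius_derive. apply cc_inside; auto. }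
  rewrite <- PSeries_incr_1. rewrite <- PSeries_minus by auto.
  unfold SS. rewrite <- PSeries_scal. apply PSeries_ext. intros n.
  unfold PS_minus, PS_scal, PS_incr_1, PS_derive. destruct n.
  - simpl. unfold plus, opp, zero, scal; simpl. unfold mult; simpl. field.
  - change (plus (INR (S (S n)) * cc (S (S n))) (opp (INR (S n) * cc (S n))) = scal (/2) (cc (S n))).
    change (INR (S (S n)) * cc (S (S n)) + - (INR (S n) * cc (S n)) = /2 * cc (S n)).
    rewrite (cc_S (S n)). rewrite !S_INR. pose proof (pos_INR n). field. lra.
Qed.

Lemma SS_is_derive x : Rabs x < 1 -> derivable_pt_lim SS x (PSeries (PS_derive cc) x).
Proof. intros Hx. apply is_derive_Reals. apply is_derive_PSeries. apply cc_inside; auto. Qed.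

Lemma SS_sq x : Rabs x < 1 -> (1 - x) * (SS x * SS x) = 1.
Proof.
  intros Hx.
  set (g := fun y => (1 - y) * (SS y * SS y)).
  assert (Hg : forall y, Rabs y < 1 -> derivable_pt_lim g y 0).
  { intros y Hy. unfold g.
    replace 0 with ((0 - 1) * (SS y * SS y) + (1 - y) * (PSeries (PS_derive cc) y * SS y + SS y * PSeries (PS_derive cc) y)).
    2:{ pose proof (SS_deriv_id y Hy). nra. }
    apply (derivable_pt_lim_mult (fun y => 1 - y) (fun y => SS y * SS y)).
    - apply (derivable_pt_lim_minus (fun _ => 1) (fun y => y)). apply derivable_pt_lim_const. apply derivable_pt_lim_id.
    - apply (derivable_pt_lim_mult SS SS); apply SS_is_derive; auto. }
  assert (H0 : g 0 = 1).
  { unfold g, SS. rewrite PSeries_0. simpl. ring. }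
  destruct (MVT_gen g 0 x (fun _ => 0)) as [c [Hc Hgc]].
  - intros y Hy. apply is_derive_Reals. apply Hg.
    unfold Rmin, Rmax in Hy. destruct Rle_dec; apply Rabs_def1; apply Rabs_def2 in Hx; lra.
  - intros y Hy. apply derivable_continuous_pt. exists 0. apply Hg.
    unfold Rmin, Rmax in Hy. destruct Rle_dec; apply Rabs_def1; apply Rabs_def2 in Hx; lra.
  - fold (g x). rewrite H0 in Hgc. lra.
Qed.

Lemma sumn_S' (a : nat -> R) n : sum_n a (S n) = sum_n a n + a (S n).
Proof. rewrite sum_Sn. reflexivity. Qed.

Lemma SS_partial x : -1 <= x -> forall N, 1/2 <= sum_n (fun k => cc k * x ^ k) N.
Proof.
  intros Hx.
  assert (Hodd : forall j, 1/2 <= sum_n (fun k => cc k * x ^ k) (2*j+1)).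
  { induction j.
    - simpl. rewrite sumn_S', sum_O. simpl. lra.
    - replace (2 * S j + 1)%nat with (S (S (2*j+1))) by lia.
      rewrite !sumn_S'.
      replace (S (2*j+1)) with (2 * (j+1))%nat by lia.
      replace (S (2 * (j + 1))) with (S (2 * (j+1)))%nat by lia.
      pose proof (cc_decr (2*(j+1))). pose proof (cc_pos (S (2*(j+1)))).
      assert (E : x ^ (2*(j+1)) = (x^(j+1))^2) by (rewrite <- pow_mult; f_equal; lia).
      assert (0 <= x ^ (2*(j+1))) by (rewrite E; apply pow2_ge_0).
      change (x ^ S (2*(j+1))) with (x * x ^ (2*(j+1))).
      assert (cc (2*(j+1)) * x ^ (2*(j+1)) + cc (S (2*(j+1))) * (x * x ^ (2*(j+1))) >= 0).
      { replace (cc (2*(j+1)) * x ^ (2*(j+1)) + cc (S (2*(j+1))) * (x * x ^ (2*(j+1))))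
          with (x ^ (2*(j+1)) * (cc (2*(j+1)) + cc (S (2*(j+1))) * x)) by ring.
        assert (0 <= cc (2*(j+1)) + cc (S (2*(j+1))) * x) by nra.
        apply Rle_ge, Rmult_le_pos; auto. }
      lra. }
  intros N. destruct N.
  - rewrite sum_O. simpl. lra.
  - destruct (Nat.Even_or_Odd N) as [[j Hj]|[j Hj]].
    + subst. replace (S (2*j)) with (2*j+1)%nat by lia. apply Hodd.
    + subst. replace (S (2*j+1)) with (S (2*j+1))%nat by lia. rewrite sumn_S'.
      pose proof (Hodd j). pose proof (cc_pos (S (2*j+1))).
      replace (S (2*j+1)) with (2*(j+1))%nat by lia.
      assert (E : x ^ (2*(j+1)) = (x^(j+1))^2) by (rewrite <- pow_mult; f_equal; lia).
      assert (0 <= x ^ (2*(j+1))) by (rewrite E; apply pow2_ge_0).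
      replace (2 * (j+1))%nat with (S (2*j+1)) in * by lia. nra.
Qed.

Lemma SS_pos x : Rabs x < 1 -> 1/2 <= SS x.
Proof.
  intros Hx. pose proof (CV_radius_inside cc x (cc_inside x Hx)) as He.
  assert (He' : ex_series (fun k => cc k * x ^ k)).
  { eapply ex_series_ext; [|exact He]. intros n. simpl. rewrite pow_n_pow. unfold scal; simpl; unfold mult; simpl. ring. }
  assert (Hs := Series_correct _ He').
  assert (L := is_lim_seq_le (fun _ => 1/2) (sum_n (fun k => cc k * x ^ k)) (1/2) (SS x)).
  apply Rabs_def2 in Hx.
  simpl in L. apply L.
  - intros. apply SS_partial. lra.
  - apply is_lim_seq_const.
  - exact Hs.
Qed.

Lemma SS_formula x : Rabs x < 1 -> SS x = / sqrt (1 - x).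
Proof.
  intros Hx. pose proof (SS_sq x Hx). pose proof (SS_pos x Hx). apply Rabs_def2 in Hx.
  rewrite <- sqrt_inv. rewrite <- (sqrt_pow2 (SS x)) by lra. f_equal.
  apply Rmult_eq_reg_l with (1 - x). 2: lra. rewrite Rinv_r by lra. nra.
Qed.



Lemma series_nonneg (a : nat -> R) : (forall n, 0 <= a n) -> ex_series a -> 0 <= Series a.
Proof.
  intros Ha He. assert (Hs := Series_correct _ He).
  assert (L := is_lim_seq_le (fun _ => 0) (sum_n a) 0 (Series a)). simpl in L. apply L.
  - intros n. induction n. rewrite sum_O; auto. rewrite sumn_S. specialize (Ha (S n)). lra.
  - apply is_lim_seq_const.
  - exact Hs.
Qed.

Lemma series_ge_term (a : nat -> R) j : (forall n, 0 <= a n) -> ex_series a -> a j <= Series a.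
Proof.
  intros Ha He. assert (Hs := Series_correct _ He).
  assert (Hm : forall N, (j <= N)%nat -> a j <= sum_n a N).
  { intros N HN. induction HN.
    - destruct j. rewrite sum_O. lra. rewrite sumn_S.
      assert (0 <= sum_n a j). { clear -Ha. induction j. rewrite sum_O; auto. rewrite sumn_S. specialize (Ha (S j)). lra. }
      lra.
    - rewrite sumn_S. specialize (Ha (S m)). lra. }
  assert (L := is_lim_seq_le_loc (fun _ => a j) (sum_n a) (a j) (Series a)). simpl in L. apply L.
  - exists j. auto.
  - apply is_lim_seq_const.
  - exact Hs.
Qed.

Lemma pow_le1 x n : 0 <= x <= 1 -> x ^ n <= 1.
Proof. intros H. induction n; simpl. lra. nra. Qed.

Lemma cont_mult (f g : R -> R) x : continuous f x -> continuous g x -> continuous (fun y => f y * g y) x.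
Proof. exact (@continuous_mult R_UniformSpace R_AbsRing f g x). Qed.

Lemma RInt_mult_series (F : R -> R) (p : nat -> R) (G : R -> R) (m : nat) (k : Z) :
  (forall t, continuous F t) -> (forall t, Rabs (F t) <= 1) ->
  (forall j, 0 <= p j) -> ex_series p ->
  (forall t, G t = Series (fun j => p j * cos t ^ j)) ->
  ex_series (fun j => p j * RInt (fun t => cos (IZR k * t) * cos t ^ (m + j) * F t) 0 (2*PI)) /\
  is_RInt (fun t => cos (IZR k * t) * cos t ^ m * (F t * G t)) 0 (2*PI)
    (Series (fun j => p j * RInt (fun t => cos (IZR k * t) * cos t ^ (m + j) * F t) 0 (2*PI))).
Proof.
  intros Fc Fb Hp Hps HG.
  pose proof PI_RGT_0.
  destruct (is_RInt_series (fun j t => p j * (cos (IZR k * t) * cos t ^ (m + j) * F t)) p 0 (2*PI)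
     (fun j => p j * RInt (fun t => cos (IZR k * t) * cos t ^ (m + j) * F t) 0 (2*PI))) as [H1 H2].
  - lra.
  - intros n t _. rewrite Rabs_mult, Rabs_right by (apply Rle_ge; auto).
    rewrite !Rabs_mult. rewrite <- RPow_abs.
    pose proof (COS_bound (IZR k * t)). pose proof (COS_bound t). pose proof (Fb t).
    assert (Rabs (cos (IZR k * t)) <= 1) by (apply Rabs_le; lra).
    assert (Rabs (cos t) <= 1) by (apply Rabs_le; lra).
    assert (Rabs (cos t) ^ (m + n) <= 1) by (apply pow_le1; split; [apply Rabs_pos| lra]). 
    pose proof (Rabs_pos (cos (IZR k * t))). pose proof (Rabs_pos (F t)).
    pose proof (pow_le (Rabs (cos t)) (m+n) (Rabs_pos _)). specialize (Hp n).
    assert (Rabs (cos (IZR k * t)) * Rabs (cos t) ^ (m + n) * Rabs (F t) <= 1).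
    { assert (Hab : Rabs (cos (IZR k * t)) * Rabs (cos t) ^ (m + n) <= 1 * 1) by (apply Rmult_le_compat; auto).
      assert (Habc : Rabs (cos (IZR k * t)) * Rabs (cos t) ^ (m + n) * Rabs (F t) <= (1 * 1) * 1).
      { apply Rmult_le_compat; auto. apply Rmult_le_pos; auto. }
      lra. }
    nra.
  - exact Hps.
  - intros n. apply (is_RInt_scal (V:=R_NormedModule) (fun t => cos (IZR k * t) * cos t ^ (m + n) * F t)).
    apply (@RInt_correct R_CompleteNormedModule). apply ex_cont. intros z _.
    apply (cont_mult (fun t => cos (IZR k * t) * cos t ^ (m + n)) F).
    apply cont_der. auto_derive. auto. apply Fc.
  - split. eexists; exact H1. eapply is_RInt_ext; [|exact H2]. intros t _. cbv beta.
    rewrite (HG t). rewrite <- Series_scal_l. rewrite <- Series_scal_l. apply Series_ext. intros j.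
    rewrite pow_add. ring.
Qed.

Definition Qc (F : R -> R) : Prop :=
  (forall m k, 0 <= RInt (fun t => cos (IZR k * t) * cos t ^ m * F t) 0 (2*PI)) /\
  (forall k, 0 < RInt (fun t => cos (IZR k * t) * cos t ^ (Z.abs_nat k) * F t) 0 (2*PI)).

Lemma Qc_one : Qc (fun _ => 1).
Proof.
  split.
  - intros m k. rewrite (RInt_ext _ (fun t => cos (IZR k * t) * cos t ^ m)).
    apply Ek_nonneg. intros; toR; ring.
  - intros k. rewrite (RInt_ext _ (fun t => cos (IZR k * t) * cos t ^ Z.abs_nat k)).
    apply Ek_abs. intros; toR; ring.
Qed.

Lemma Qc_mult (F : R -> R) (p : nat -> R) (G : R -> R) :
  Qc F -> (forall t, continuous F t) -> (forall t, Rabs (F t) <= 1) ->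
  (forall j, 0 <= p j) -> 0 < p 0%nat -> ex_series p ->
  (forall t, G t = Series (fun j => p j * cos t ^ j)) ->
  Qc (fun t => F t * G t).
Proof.
  intros [Q1 Q2] Fc Fb Hp Hp0 Hps HG. split.
  - intros m k. destruct (RInt_mult_series F p G m k Fc Fb Hp Hps HG) as [He Hi].
    rewrite (is_RInt_unique _ _ _ _ Hi). apply series_nonneg; auto.
    intros n. apply Rmult_le_pos; auto.
  - intros k. destruct (RInt_mult_series F p G (Z.abs_nat k) k Fc Fb Hp Hps HG) as [He Hi].
    rewrite (is_RInt_unique _ _ _ _ Hi).
    eapply Rlt_le_trans; [|apply (series_ge_term _ 0%nat)]; auto.
    + cbv beta. rewrite Nat.add_0_r. apply Rmult_lt_0_compat; auto.
    + intros n. apply Rmult_le_pos; auto.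
Qed.

Lemma Qc_final (F : R -> R) (p : nat -> R) (G : R -> R) k :
  Qc F -> (forall t, continuous F t) -> (forall t, Rabs (F t) <= 1) ->
  (forall j, 0 < p j) -> ex_series p ->
  (forall t, G t = Series (fun j => p j * cos t ^ j)) ->
  0 < RInt (fun t => cos (IZR k * t) * (F t * G t)) 0 (2*PI).
Proof.
  intros [Q1 Q2] Fc Fb Hp Hps HG.
  assert (Hp' : forall j, 0 <= p j) by (intros j; left; auto).
  destruct (RInt_mult_series F p G 0 k Fc Fb Hp' Hps HG) as [He Hi].
  rewrite (RInt_ext _ (fun t => cos (IZR k * t) * cos t ^ 0 * (F t * G t))) by (intros; simpl; toR; ring).
  rewrite (is_RInt_unique _ _ _ _ Hi).
  eapply Rlt_le_trans; [|apply (series_ge_term _ (Z.abs_nat k))]; auto.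
  + apply Rmult_lt_0_compat; auto.
  + intros n. apply Rmult_le_pos; auto.
Qed.



Definition rho (xi : R) := 1 - xi ^ 2.

Lemma rho_bounds xi : 0 < xi < 1 -> 0 < rho xi < 1.
Proof. intros. unfold rho. nra. Qed.

Lemma mu_fact xi t : 0 < xi < 1 -> mu xi t = / xi ^ 2 * (1 - rho xi * cos t).
Proof. intros. unfold mu, rho. field. nra. Qed.

Lemma mu_ge1 xi t : 0 < xi < 1 -> 1 <= mu xi t.
Proof.
  intros H. unfold mu. pose proof (COS_bound t).
  assert (1 < / xi ^ 2). { rewrite <- Rinv_1. apply Rinv_lt_contravar; nra. }
  nra.
Qed.

Lemma mu_gt1 xi t : 0 < xi < 1 -> cos t < 1 -> 1 < mu xi t.
Proof.
  intros H Hc. unfold mu.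
  assert (1 < / xi ^ 2). { rewrite <- Rinv_1. apply Rinv_lt_contravar; nra. }
  nra.
Qed.

Lemma q_bound xi t : 0 < xi < 1 -> Rabs (rho xi * cos t) < 1.
Proof.
  intros H. pose proof (rho_bounds xi H). pose proof (COS_bound t).
  rewrite Rabs_mult. rewrite (Rabs_right (rho xi)) by lra.
  assert (Rabs (cos t) <= 1) by (apply Rabs_le; lra). pose proof (Rabs_pos (cos t)). nra.
Qed.

Lemma inv_mu_series xi t : 0 < xi < 1 ->
  / mu xi t = Series (fun j => (xi ^ 2 * rho xi ^ j) * cos t ^ j).
Proof.
  intros H. rewrite mu_fact by auto.
  rewrite (Series_ext _ (fun j => xi ^ 2 * (rho xi * cos t) ^ j)).
  2:{ intros n. rewrite Rpow_mult_distr. ring. }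
  rewrite Series_scal_l. assert (Hg : Series (pow (rho xi * cos t)) = / (1 - rho xi * cos t)) by (apply is_series_unique; apply is_series_geom; apply q_bound; auto). rewrite Hg.
  pose proof (q_bound xi t H). apply Rabs_def2 in H0.
  field. split; nra.
Qed.

Lemma isqrt_mu_series xi t : 0 < xi < 1 ->
  / sqrt (mu xi t) = Series (fun j => (xi * cc j * rho xi ^ j) * cos t ^ j).
Proof.
  intros H. rewrite mu_fact by auto.
  rewrite (Series_ext _ (fun j => xi * (cc j * (rho xi * cos t) ^ j))).
  2:{ intros n. rewrite Rpow_mult_distr. ring. }
  rewrite Series_scal_l. change (Series (fun j => cc j * (rho xi * cos t) ^ j)) with (SS (rho xi * cos t)).
  rewrite SS_formula by (apply q_bound; auto).
  pose proof (q_bound xi t H). apply Rabs_def2 in H0.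
  rewrite sqrt_mult_alt. 2:{ left. apply Rinv_0_lt_compat. nra. }
  rewrite sqrt_inv. rewrite sqrt_pow2 by lra.
  assert (0 < sqrt (1 - rho xi * cos t)) by (apply sqrt_lt_R0; lra).
  field. split; lra.
Qed.

Lemma ex_series_ml (c : R) (a : nat -> R) : ex_series a -> ex_series (fun n => c * a n).
Proof. intros [l Hl]. exists (c * l). exact (@is_series_scal_l R_AbsRing R_NormedModule c a l Hl). Qed.

Lemma ex_geom_p xi : 0 < xi < 1 -> ex_series (fun j => xi ^ 2 * rho xi ^ j).
Proof.
  intros H. pose proof (rho_bounds xi H).
  apply ex_series_ml. eexists. apply is_series_geom. rewrite Rabs_right; lra.
Qed.

Lemma ex_sqrt_p xi : 0 < xi < 1 -> ex_series (fun j => xi * cc j * rho xi ^ j).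
Proof.
  intros H. pose proof (rho_bounds xi H).
  apply (ex_series_le (fun j => xi * cc j * rho xi ^ j) (fun j => xi * rho xi ^ j)).
  - intros n. change (norm (xi * cc n * rho xi ^ n)) with (Rabs (xi * cc n * rho xi ^ n)).
    pose proof (cc_pos n). pose proof (cc_le1 n). pose proof (pow_lt (rho xi) n ltac:(lra)).
    rewrite Rabs_right. 2:{ apply Rle_ge. repeat apply Rmult_le_pos; lra. }
    apply Rmult_le_compat_r. lra. nra.
  - apply ex_series_ml. eexists. apply is_series_geom. rewrite Rabs_right; lra.
Qed.

Definition Fpw (xi : R) (n : nat) (t : R) := / mu xi t ^ n.
Definition en (xi : R) (n : nat) (t : R) := Fpw xi n t * / sqrt (mu xi t).

Lemma Fpw_cont xi n t : 0 < xi < 1 -> continuous (Fpw xi n) t.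
Proof.
  intros H. apply cont_der. unfold Fpw, mu. auto_derive.
  pose proof (mu_ge1 xi t H). unfold mu in H0. apply pow_nonzero. replace (xi*(xi*1)) with (xi^2) by ring. lra.
Qed.

Lemma en_cont xi n t : 0 < xi < 1 -> continuous (en xi n) t.
Proof.
  intros H. apply cont_der. unfold en, Fpw, mu. auto_derive.
  pose proof (mu_ge1 xi t H). unfold mu in H0. replace (xi*(xi*1)) with (xi^2) by ring.
  repeat split.
  - apply pow_nonzero. lra.
  - lra.
  - intro Hs. assert (0 < sqrt (/ xi ^ 2 + (1 - / xi ^ 2) * cos t)) by (apply sqrt_lt_R0; lra). lra.
Qed.

Lemma Fpw_bound xi n t : 0 < xi < 1 -> 0 < Fpw xi n t <= 1.
Proof.
  intros H. pose proof (mu_ge1 xi t H). unfold Fpw. split.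
  - apply Rinv_0_lt_compat. apply pow_lt. lra.
  - pose proof (pow_R1_Rle (mu xi t) n H0). rewrite <- Rinv_1. apply Rinv_le_contravar; lra.
Qed.

Lemma en_bound xi n t : 0 < xi < 1 -> 0 < en xi n t <= 1.
Proof.
  intros H. pose proof (mu_ge1 xi t H). pose proof (Fpw_bound xi n t H). unfold en.
  assert (1 <= sqrt (mu xi t)) by (rewrite <- sqrt_1; apply sqrt_le_1_alt; lra).
  assert (0 < / sqrt (mu xi t) <= 1).
  { split. apply Rinv_0_lt_compat; lra. rewrite <- Rinv_1. apply Rinv_le_contravar; lra. }
  split. apply Rmult_lt_0_compat; lra. nra.
Qed.

Lemma Qc_Fpw xi n : 0 < xi < 1 -> Qc (Fpw xi n).
Proof.
  intros H. induction n.
  - destruct Qc_one as [Q1 Q2]. split.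
    + intros m k. rewrite (RInt_ext _ (fun t => cos (IZR k * t) * cos t ^ m * 1)). apply Q1.
      intros. unfold Fpw. simpl. rewrite Rinv_1. reflexivity.
    + intros k. rewrite (RInt_ext _ (fun t => cos (IZR k * t) * cos t ^ Z.abs_nat k * 1)). apply Q2.
      intros. unfold Fpw. simpl. rewrite Rinv_1. reflexivity.
  - assert (Q := Qc_mult (Fpw xi n) (fun j => xi ^ 2 * rho xi ^ j) (fun t => / mu xi t) IHn
      (fun t => Fpw_cont xi n t H)).
    destruct Q as [Q1 Q2].
    + intros t. pose proof (Fpw_bound xi n t H). rewrite Rabs_right; lra.
    + intros j. pose proof (rho_bounds xi H). apply Rmult_le_pos. nra. apply pow_le. lra.
    + simpl. pose proof (rho_bounds xi H). nra.
    + apply ex_geom_p; auto.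
    + intros t. apply inv_mu_series; auto.
    + split.
      * intros m k. rewrite (RInt_ext _ (fun t => cos (IZR k * t) * cos t ^ m * (Fpw xi n t * / mu xi t))). apply Q1.
        intros. unfold Fpw. simpl. rewrite Rinv_mult. toR. ring.
      * intros k. rewrite (RInt_ext _ (fun t => cos (IZR k * t) * cos t ^ Z.abs_nat k * (Fpw xi n t * / mu xi t))). apply Q2.
        intros. unfold Fpw. simpl. rewrite Rinv_mult. toR. ring.
Qed.

Lemma en_pos xi n k : 0 < xi < 1 -> 0 < RInt (fun t => cos (IZR k * t) * en xi n t) 0 (2*PI).
Proof.
  intros H. unfold en.
  apply (Qc_final (Fpw xi n) (fun j => xi * cc j * rho xi ^ j) (fun t => / sqrt (mu xi t)) k (Qc_Fpw xi n H)).
  - intros t. apply Fpw_cont; auto.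
  - intros t. pose proof (Fpw_bound xi n t H). rewrite Rabs_right; lra.
  - intros j. pose proof (rho_bounds xi H). pose proof (cc_pos j). apply Rmult_lt_0_compat. nra. apply pow_lt. lra.
  - apply ex_sqrt_p; auto.
  - intros t. apply isqrt_mu_series; auto.
Qed.



Lemma sin_sq_lower_pos x : 0 <= x <= PI / 2 -> x ^ 2 / 9 <= sin x ^ 2.
Proof.
  intros Hx. pose proof PI_4. pose proof PI2_Rlt_PI.
  destruct (sin_bound x 0) as [H1 _]; try lra.
  unfold sin_approx, sin_term in H1. simpl in H1. unfold Factorial.fact in H1. simpl in H1.
  assert (x - x^3/6 <= sin x) by (field_simplify in H1; field_simplify; lra).
  assert (x <= 2) by lra.
  assert (x / 3 <= x - x^3/6) by nra.
  assert (0 <= x / 3) by lra.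
  nra.
Qed.

Lemma sin_sq_lower x : Rabs x <= PI / 2 -> x ^ 2 / 9 <= sin x ^ 2.
Proof.
  intros Hx. destruct (Rle_dec 0 x).
  - apply sin_sq_lower_pos. rewrite Rabs_right in Hx; lra.
  - rewrite Rabs_left in Hx by lra.
    replace (sin x ^ 2) with (sin (-x) ^ 2) by (rewrite sin_neg; ring).
    replace (x ^ 2) with ((-x)^2) by ring. apply sin_sq_lower_pos. lra.
Qed.

Definition bump (c b t : R) := / (1 + b * (t - c) ^ 2).

Lemma bump_is_RInt c b lo hi : 0 < b ->
  is_RInt (bump c b) lo hi ((atan (sqrt b * (hi - c)) - atan (sqrt b * (lo - c))) / sqrt b).
Proof.
  intros Hb. pose proof (sqrt_lt_R0 b Hb) as Hs.
  assert (HH := RInt_ftc (fun t => atan (sqrt b * (t - c)) / sqrt b) (bump c b) lo hi).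
  cbv beta in HH.
  replace ((atan (sqrt b * (hi - c)) - atan (sqrt b * (lo - c))) / sqrt b)
    with (atan (sqrt b * (hi - c)) / sqrt b - atan (sqrt b * (lo - c)) / sqrt b) by (field; lra).
  apply HH.
  - intros x _. 
    assert (D := derivable_pt_lim_atan (sqrt b * (x - c))).
    apply is_derive_Reals in D.
    assert (D2 : is_derive (fun t => sqrt b * (t - c)) x (sqrt b)) by (auto_derive; auto; ring).
    assert (D3 := is_derive_comp atan (fun t => sqrt b * (t - c)) x _ _ D D2).
    assert (D4 : is_derive (fun t => atan (sqrt b * (t - c)) / sqrt b) x
                 (scal (sqrt b) (/ (1 + (sqrt b * (x - c)) ^ 2)) / sqrt b)).
    { apply is_derive_Reals. apply is_derive_Reals in D3.
      apply (derivable_pt_lim_div (fun t => atan (sqrt b * (t - c))) (fun _ => sqrt b) x _ 0) in D3.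
      2: apply derivable_pt_lim_const. 2: lra.
      replace (scal (sqrt b) (/ (1 + (sqrt b * (x - c)) ^ 2)) / sqrt b) with
        ((scal (sqrt b) (/ (1 + (sqrt b * (x - c)) ^ 2)) * sqrt b - 0 * atan (sqrt b * (x - c))) / (sqrt b)²).
      exact D3. unfold Rsqr. field. lra. }
    replace (bump c b x) with (scal (sqrt b) (/ (1 + (sqrt b * (x - c)) ^ 2)) / sqrt b). exact D4.
    unfold scal; simpl; unfold mult; simpl. unfold bump.
    assert (Hsb: sqrt b * sqrt b = b) by (apply sqrt_sqrt; lra).
    replace (1 + sqrt b * (x - c) * (sqrt b * (x - c) * 1)) with (1 + b*(x-c)^2) by (simpl; nra).
    pose proof (pow2_ge_0 (x - c)).
    field. split; [nra|lra].
  - intros x _. apply cont_der. unfold bump. auto_derive. pose proof (pow2_ge_0 (x - c)). nra.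
Qed.

Lemma bump_int_le c b lo hi : 0 < b -> lo <= hi -> RInt (bump c b) lo hi <= PI / sqrt b.
Proof.
  intros Hb Hlh. rewrite (is_RInt_unique _ _ _ _ (bump_is_RInt c b lo hi Hb)).
  pose proof (sqrt_lt_R0 b Hb). pose proof (atan_bound (sqrt b * (hi - c))). pose proof (atan_bound (sqrt b * (lo - c))).
  unfold Rdiv. apply Rmult_le_compat_r. left; apply Rinv_0_lt_compat; lra. lra.
Qed.

Lemma bump_pos c b t : 0 <= b -> 0 < bump c b t.
Proof. intros. unfold bump. apply Rinv_0_lt_compat. pose proof (pow2_ge_0 (t - c)). nra. Qed.

Lemma bump_dom c g t x : 0 < g -> Rabs x <= PI / 2 -> sin t ^ 2 = sin x ^ 2 -> x = t - c ->
  / (1 + g * sin t ^ 2) <= bump c (g / 9) t.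
Proof.
  intros Hg Hx Hs Hxc. unfold bump. rewrite <- Hxc. rewrite Hs.
  pose proof (sin_sq_lower x Hx). pose proof (pow2_ge_0 x).
  apply Rinv_le_contravar. nra. 
  assert (g / 9 * x ^ 2 <= g * sin x ^ 2).
  { replace (g / 9 * x ^ 2) with (g * (x ^ 2 / 9)) by field. apply Rmult_le_compat_l; lra. }
  lra.
Qed.

Lemma inv_sin_le_bumps g t : 0 < g -> 0 <= t <= 2 * PI ->
  / (1 + g * sin t ^ 2) <= bump 0 (g/9) t + bump PI (g/9) t + bump (2*PI) (g/9) t.
Proof.
  intros Hg Ht.
  pose proof (bump_pos 0 (g/9) t). pose proof (bump_pos PI (g/9) t). pose proof (bump_pos (2*PI) (g/9) t).
  assert (0 <= g/9) by lra.
  specialize (H H2). specialize (H0 H2). specialize (H1 H2).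
  destruct (Rle_dec t (PI/2)).
  - assert (HH : / (1 + g * sin t ^ 2) <= bump 0 (g / 9) t).
    { apply (bump_dom 0 g t t Hg). rewrite Rabs_right; lra. reflexivity. ring. }
    lra.
  - destruct (Rle_dec t (3 * (PI/2))).
    + assert (HH : / (1 + g * sin t ^ 2) <= bump PI (g / 9) t).
      { apply (bump_dom PI g t (t - PI) Hg). apply Rabs_le; lra.
        rewrite sin_minus, sin_PI, cos_PI. ring. reflexivity. }
      lra.
    + assert (HH : / (1 + g * sin t ^ 2) <= bump (2*PI) (g / 9) t).
      { apply (bump_dom (2*PI) g t (t - 2*PI) Hg). apply Rabs_le; lra.
        rewrite sin_minus, sin_2PI, cos_2PI. ring. reflexivity. }
      lra.
Qed.

Lemma Zbound g : 0 < g ->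
  ex_RInt (fun t => / (1 + g * sin t ^ 2)) 0 (2*PI) /\
  RInt (fun t => / (1 + g * sin t ^ 2)) 0 (2*PI) <= 9 * PI / sqrt g.
Proof.
  intros Hg. pose proof PI_RGT_0.
  assert (Hex : ex_RInt (fun t => / (1 + g * sin t ^ 2)) 0 (2*PI)).
  { apply ex_cont. intros z _. apply cont_der. auto_derive. pose proof (pow2_ge_0 (sin z)). simpl in *. nra. }
  split; auto.
  assert (Hb : 0 < g / 9) by lra.
  assert (I1 := bump_is_RInt 0 (g/9) 0 (2*PI) Hb).
  assert (I2 := bump_is_RInt PI (g/9) 0 (2*PI) Hb).
  assert (I3 := bump_is_RInt (2*PI) (g/9) 0 (2*PI) Hb).
  assert (I12 := is_RInt_plus _ _ _ _ _ _ I1 I2).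
  assert (I123 := is_RInt_plus _ _ _ _ _ _ I12 I3).
  eapply Rle_trans.
  - apply (is_RInt_le _ _ 0 (2*PI) _ _ ltac:(lra) (RInt_correct _ _ _ Hex) I123).
    intros x Hx. apply inv_sin_le_bumps; lra.
  - assert (sqrt (g/9) = sqrt g / 3).
    { replace (g/9) with (g * / 3^2) by field. rewrite sqrt_mult_alt by lra.
      rewrite sqrt_inv, sqrt_pow2 by lra. field. }
    pose proof (sqrt_lt_R0 g Hg).
    unfold plus; simpl. rewrite H0.
    assert (A1 := atan_bound (sqrt g / 3 * (2 * PI - 0))). assert (A2 := atan_bound (sqrt g / 3 * (0 - 0))).
    assert (A3 := atan_bound (sqrt g / 3 * (2 * PI - PI))). assert (A4 := atan_bound (sqrt g / 3 * (0 - PI))).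
    assert (A5 := atan_bound (sqrt g / 3 * (2 * PI - 2*PI))). assert (A6 := atan_bound (sqrt g / 3 * (0 - 2*PI))).
    set (s := sqrt g) in *.
    replace (9 * PI / s) with (3 * PI / (s / 3)) by (field; lra).
    set (a1 := atan (s / 3 * (2 * PI - 0))) in *. set (a2 := atan (s / 3 * (0 - 0))) in *.
    set (a3 := atan (s / 3 * (2 * PI - PI))) in *. set (a4 := atan (s / 3 * (0 - PI))) in *.
    set (a5 := atan (s / 3 * (2 * PI - 2 * PI))) in *. set (a6 := atan (s / 3 * (0 - 2 * PI))) in *.
    replace ((a1 - a2) / (s / 3) + (a3 - a4) / (s / 3) + (a5 - a6) / (s / 3))
      with ((a1 - a2 + (a3 - a4) + (a5 - a6)) * / (s / 3)) by (field; lra).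
    unfold Rdiv. apply Rmult_le_compat_r. left; apply Rinv_0_lt_compat; lra. lra.
Qed.

Lemma bernoulli y n : 0 <= y -> 1 + INR n * y <= (1 + y) ^ n.
Proof.
  intros Hy. induction n. simpl. lra.
  rewrite S_INR. simpl. pose proof (pos_INR n). nra.
Qed.

Lemma cos_pow_bound n t : Rabs (cos t) ^ n <= / (1 + (INR n / 2) * sin t ^ 2).
Proof.
  set (s2 := sin t ^ 2). set (c := Rabs (cos t)).
  assert (Hc2 : c ^ 2 = 1 - s2).
  { unfold c, s2. rewrite pow2_abs. pose proof (sin2_cos2 t). unfold Rsqr in H. simpl. nra. }
  assert (Hs : 0 <= s2) by apply pow2_ge_0.
  assert (Hc : 0 <= c) by apply Rabs_pos.
  assert (Hs1 : s2 <= 1) by nra.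
  assert (H1 : c * (1 + s2/2) <= 1).
  { assert ((c * (1 + s2/2))^2 <= 1).
    { replace ((c * (1 + s2/2))^2) with (c^2 * (1 + s2/2)^2) by ring. rewrite Hc2. nra. }
    nra. }
  assert (H2 : c <= / (1 + s2/2)).
  { apply Rmult_le_reg_r with (1 + s2/2). lra. rewrite Rinv_l by lra. lra. }
  apply Rle_trans with ((/ (1 + s2/2)) ^ n).
  - apply pow_incr. lra.
  - rewrite pow_inv. apply Rinv_le_contravar. pose proof (pos_INR n). nra.
    replace (INR n / 2 * s2) with (INR n * (s2 / 2)) by field. apply bernoulli. lra.
Qed.

Lemma Ek_bound n l : (1 <= n)%nat -> Ek n l <= 9 * PI / sqrt (INR n / 2).
Proof.
  intros Hn. assert (0 < INR n / 2). { apply le_INR in Hn. simpl in Hn. lra. }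
  destruct (Zbound (INR n / 2) H) as [Hex Hb].
  eapply Rle_trans; [|exact Hb]. unfold Ek. pose proof PI_RGT_0.
  apply RInt_le. lra. apply ex_Ek. exact Hex.
  intros x _. eapply Rle_trans; [|apply cos_pow_bound].
  rewrite RPow_abs. eapply Rle_trans; [apply Rle_abs|]. rewrite Rabs_mult.
  pose proof (COS_bound (IZR l * x)). assert (Rabs (cos (IZR l * x)) <= 1) by (apply Rabs_le; lra).
  pose proof (Rabs_pos (cos x ^ n)). pose proof (Rabs_pos (cos (IZR l * x))). nra.
Qed.



Lemma A1_pos xi : 0 < xi < 1 -> 0 < / xi ^ 2 - 1.
Proof. intros. assert (1 < / xi ^ 2). { rewrite <- Rinv_1. apply Rinv_lt_contravar; nra. } lra. Qed.

Lemma ex_en xi n a b : 0 < xi < 1 -> ex_RInt (en xi n) a b.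
Proof. intros. apply ex_cont. intros. apply en_cont; auto. Qed.

Lemma M_bound xi n : 0 < xi < 1 -> (1 <= n)%nat ->
  RInt (en xi n) 0 (2*PI) <= 9 * PI / sqrt (INR n * (/ xi ^ 2 - 1) / 2).
Proof.
  intros H Hn. pose proof (A1_pos xi H).
  assert (1 <= INR n) by (apply le_INR in Hn; simpl in Hn; lra).
  assert (Hg : 0 < INR n * (/ xi ^ 2 - 1) / 2) by nra.
  destruct (Zbound _ Hg) as [Hex Hb].
  eapply Rle_trans; [|exact Hb]. pose proof PI_RGT_0.
  apply RInt_le. lra. apply ex_en; auto. exact Hex.
  intros x _. pose proof (en_bound xi n x H). pose proof (Fpw_bound xi n x H).
  apply Rle_trans with (Fpw xi n x).
  - unfold en. pose proof (mu_ge1 xi x H).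
    assert (1 <= sqrt (mu xi x)) by (rewrite <- sqrt_1; apply sqrt_le_1_alt; lra).
    assert (0 < / sqrt (mu xi x) <= 1).
    { split. apply Rinv_0_lt_compat; lra. rewrite <- Rinv_1. apply Rinv_le_contravar; lra. }
    nra.
  - unfold Fpw. 
    assert (Hm : mu xi x = 1 + (/ xi ^ 2 - 1) * (1 - cos x)) by (unfold mu; ring).
    pose proof (COS_bound x).
    assert (Hy : 0 <= (/ xi ^ 2 - 1) * (1 - cos x)) by nra.
    pose proof (bernoulli _ n Hy).
    assert (Hsc : sin x ^ 2 / 2 <= 1 - cos x).
    { pose proof (sin2_cos2 x) as Hsc2. unfold Rsqr in Hsc2. simpl. pose proof (pow2_ge_0 (1 - cos x)). nra. }
    apply Rinv_le_contravar. pose proof (pow2_ge_0 (sin x)). nra.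
    rewrite Hm. eapply Rle_trans; [|exact H6].
    assert (INR n * (/ xi ^ 2 - 1) / 2 * sin x ^ 2 <= INR n * ((/ xi ^ 2 - 1) * (1 - cos x))).
    { replace (INR n * (/ xi ^ 2 - 1) / 2 * sin x ^ 2) with (INR n * ((/ xi ^ 2 - 1) * (sin x ^ 2 / 2))) by (unfold Rdiv; ring).
      apply Rmult_le_compat_l. lra. apply Rmult_le_compat_l; lra. }
    lra.
Qed.


Lemma ex_series_bounded (a : nat -> R) M : (forall n, 0 <= a n) -> (forall N, sum_n a N <= M) -> ex_series a.
Proof.
  intros Ha HM. destruct (ex_finite_lim_seq_incr (sum_n a) M) as [l Hl].
  - intros n. rewrite sumn_S. specialize (Ha (S n)). lra.
  - exact HM.
  - exists l. exact Hl.
Qed.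

Lemma tele_ineq m : 1 <= m -> / (m * sqrt (m + 1)) <= 4 * (/ sqrt m - / sqrt (m + 1)).
Proof.
  intros Hm.
  assert (Ha : 0 < sqrt m) by (apply sqrt_lt_R0; lra).
  assert (Hb : 0 < sqrt (m+1)) by (apply sqrt_lt_R0; lra).
  assert (Ha2 : sqrt m * sqrt m = m) by (apply sqrt_sqrt; lra).
  assert (Hb2 : sqrt (m+1) * sqrt (m+1) = m + 1) by (apply sqrt_sqrt; lra).
  set (a := sqrt m) in *. set (b := sqrt (m+1)) in *.
  assert (Hab : a < b) by nra.
  assert (Hd : b - a = / (a + b)).
  { apply Rmult_eq_reg_r with (a + b). rewrite Rinv_l by lra. nra. lra. }
  assert (E : 4 * (/ a - / b) = 4 / (a * b * (a + b))).
  { replace (/ a - / b) with ((b - a) / (a * b)) by (field; lra). rewrite Hd. field. split; lra. }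
  rewrite E.
  assert (Hb3 : b <= 3 * a) by nra.
  rewrite <- Ha2.
  replace (/ (a * a * b)) with ((a + b) * / (a * a * b * (a + b))) by (field; lra).
  replace (4 / (a * b * (a + b))) with (4 * a * / (a * a * b * (a + b))) by (field; lra).
  apply Rmult_le_compat_r. left; apply Rinv_0_lt_compat.
  apply Rmult_lt_0_compat; [|lra]. apply Rmult_lt_0_compat; [|lra]. nra. lra.
Qed.

Lemma cc_le_isqrt n : cc n <= / sqrt (INR n + 1).
Proof.
  pose proof (cc_sq n). pose proof (cc_pos n). pose proof (pos_INR n).
  rewrite <- sqrt_inv. rewrite <- (sqrt_pow2 (cc n)) by lra. apply sqrt_le_1_alt.
  apply Rmult_le_reg_r with (INR n + 1). lra. rewrite Rinv_l by lra. lra.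
Qed.

Lemma RInt_en_nonneg xi n : 0 < xi < 1 -> 0 <= RInt (en xi n) 0 (2*PI).
Proof.
  intros H. pose proof PI_RGT_0. apply Rle_trans with (RInt (fun _ => 0) 0 (2*PI)).
  { rewrite RInt_const. unfold scal; simpl; unfold mult; simpl. rewrite Rmult_0_r. lra. }
  apply RInt_le. lra. apply ex_cont; intros; apply continuous_const. apply ex_en; auto.
  intros x _. pose proof (en_bound xi n x H). lra.
Qed.

Lemma term_bound xi l m : 0 < xi < 1 -> (1 <= m)%nat ->
  cc m * Ek m l * RInt (en xi m) 0 (2*PI) <=
  162 * PI ^ 2 / sqrt (/ xi ^ 2 - 1) * / (INR m * sqrt (INR m + 1)).
Proof.
  intros H Hm. pose proof (A1_pos xi H) as HA. set (A1 := / xi ^ 2 - 1) in *.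
  assert (HmR : 1 <= INR m) by (apply le_INR in Hm; simpl in Hm; lra).
  pose proof (Ek_bound m l Hm) as HE. pose proof (M_bound xi m H Hm) as HM. fold A1 in HM.
  pose proof (Ek_nonneg m l). pose proof (RInt_en_nonneg xi m H). pose proof (cc_pos m).
  pose proof (cc_le_isqrt m). pose proof PI_RGT_0.
  assert (s1 : 0 < sqrt (INR m / 2)) by (apply sqrt_lt_R0; lra).
  assert (s2 : 0 < sqrt (INR m * A1 / 2)) by (apply sqrt_lt_R0; nra).
  assert (s3 : 0 < sqrt A1) by (apply sqrt_lt_R0; lra).
  assert (s4 : 0 < sqrt (INR m + 1)) by (apply sqrt_lt_R0; lra).
  assert (Hprod : sqrt (INR m / 2) * sqrt (INR m * A1 / 2) = INR m * sqrt A1 / 2).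
  { rewrite <- sqrt_mult_alt by lra.
    replace (INR m / 2 * (INR m * A1 / 2)) with ((INR m / 2) ^ 2 * A1) by (field).
    rewrite sqrt_mult_alt. rewrite sqrt_pow2 by lra. field. apply pow2_ge_0. }
  apply Rle_trans with (/ sqrt (INR m + 1) * (9 * PI / sqrt (INR m / 2)) * (9 * PI / sqrt (INR m * A1 / 2))).
  - apply Rmult_le_compat; [apply Rmult_le_pos; lra | lra | | lra]. apply Rmult_le_compat; lra.
  - replace (/ sqrt (INR m + 1) * (9 * PI / sqrt (INR m / 2)) * (9 * PI / sqrt (INR m * A1 / 2)))
      with (81 * PI ^ 2 / (sqrt (INR m + 1) * (sqrt (INR m / 2) * sqrt (INR m * A1 / 2)))) by (field; lra).
    rewrite Hprod. right. field. repeat split; lra.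
Qed.

Lemma ex_series_wM xi l : 0 < xi < 1 ->
  ex_series (fun n => cc n * Ek n l * RInt (en xi n) 0 (2*PI)).
Proof.
  intros H. apply ex_series_incr_1.
  set (K := 162 * PI ^ 2 / sqrt (/ xi ^ 2 - 1)).
  assert (HK : 0 < K).
  { unfold K. pose proof PI_RGT_0. pose proof (A1_pos xi H). apply Rdiv_lt_0_compat. nra. apply sqrt_lt_R0. lra. }
  set (f := fun n : nat => / sqrt (INR n + 1)).
  apply (ex_series_bounded _ (4 * K * f 0%nat)).
  - intros n. pose proof (Ek_nonneg (S n) l). pose proof (RInt_en_nonneg xi (S n) H). pose proof (cc_pos (S n)).
    apply Rmult_le_pos; [apply Rmult_le_pos|]; lra.
  - assert (Hb : forall n, cc (S n) * Ek (S n) l * RInt (en xi (S n)) 0 (2*PI) <= 4 * K * (f n - f (S n))).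
    { intros n. eapply Rle_trans. apply term_bound; auto; lia. fold K.
      replace (4 * K * (f n - f (S n))) with (K * (4 * (f n - f (S n)))) by ring.
      apply Rmult_le_compat_l. lra. unfold f. rewrite !S_INR.
      replace (INR n + 1 + 1) with ((INR n + 1) + 1) by ring. apply tele_ineq. pose proof (pos_INR n); lra. }
    assert (Hf : forall n, 0 <= f n).
    { intros n. unfold f. left. apply Rinv_0_lt_compat, sqrt_lt_R0. pose proof (pos_INR n); lra. }
    assert (Hs : forall N, sum_n (fun n => cc (S n) * Ek (S n) l * RInt (en xi (S n)) 0 (2*PI)) N <= 4 * K * (f 0%nat - f (S N))).
    { induction N.
      - rewrite sum_O. apply Hb.
      - rewrite sumn_S. specialize (Hb (S N)). nra. }
    intros N. specialize (Hs N). specialize (Hf (S N)). nra.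
Qed.



Lemma cos_int_2PI l : cos (IZR l * (2 * PI)) = 1.
Proof.
  destruct (Z_le_gt_dec 0 l).
  - replace (IZR l * (2 * PI)) with (0 + 2 * INR (Z.to_nat l) * PI).
    rewrite cos_period. apply cos_0. rewrite INR_IZR_INZ. rewrite Z2Nat.id by lia. ring.
  - replace (IZR l * (2 * PI)) with (- (0 + 2 * INR (Z.to_nat (- l)) * PI)).
    rewrite cos_neg. rewrite cos_period. apply cos_0.
    rewrite INR_IZR_INZ. rewrite Z2Nat.id by lia. rewrite opp_IZR. ring.
Qed.

Lemma sin_int_2PI l : sin (IZR l * (2 * PI)) = 0.
Proof. apply sin_eq_0_1. exists (2 * l)%Z. rewrite mult_IZR. ring. Qed.

Lemma cos_refl l t : cos (IZR l * (2 * PI - t)) = cos (IZR l * t).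
Proof.
  replace (IZR l * (2 * PI - t)) with (IZR l * (2 * PI) - IZR l * t) by ring.
  rewrite cos_minus, cos_int_2PI, sin_int_2PI. ring.
Qed.

Lemma sin_refl l t : sin (IZR l * (2 * PI - t)) = - sin (IZR l * t).
Proof.
  replace (IZR l * (2 * PI - t)) with (IZR l * (2 * PI) - IZR l * t) by ring.
  rewrite sin_minus, cos_int_2PI, sin_int_2PI. ring.
Qed.

Lemma to_Defs f a b v : is_RInt f a b v -> Defs.is_RInt f a b v.
Proof.
  intros H. assert (He : ex_RInt f a b) by (exists v; auto).
  exists (ex_RInt_Reals_0 _ _ _ He). rewrite <- RInt_Reals. apply is_RInt_unique. auto.
Qed.

Lemma sumn_le (u v : nat -> R) N : (forall n, u n <= v n) -> sum_n u N <= sum_n v N.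
Proof. intros H. induction N. rewrite !sum_O; auto. rewrite !sumn_S. specialize (H (S N)). lra. Qed.

Lemma sumn_abs (u : nat -> R) N : Rabs (sum_n u N) <= sum_n (fun n => Rabs (u n)) N.
Proof. induction N. rewrite !sum_O; lra. rewrite !sumn_S. pose proof (Rabs_triang (sum_n u N) (u (S N))). lra. Qed.

Lemma sumn_nonneg (u : nat -> R) N : (forall n, 0 <= u n) -> 0 <= sum_n u N.
Proof. intros H. induction N. rewrite sum_O; auto. rewrite sumn_S. specialize (H (S N)). lra. Qed.

Lemma sumn_scal_r (u : nat -> R) c N : sum_n (fun n => u n * c) N = sum_n u N * c.
Proof. induction N. rewrite !sum_O; auto. rewrite !sumn_S. rewrite IHN. toR; ring. Qed.

Lemma tannery (w M F : nat -> R) (J : R -> R -> nat -> R) :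
  (forall n, 0 <= w n) -> ex_series (fun n => w n * M n) -> ex_series (fun n => w n * F n) ->
  (forall a b n, 0 < a < PI -> PI < b < 2 * PI ->
     Rabs (J a b n - F n) <= M n /\ Rabs (J a b n - F n) <= a + (2 * PI - b)) ->
  (forall a b, 0 < a < PI -> PI < b < 2 * PI -> ex_series (fun n => w n * J a b n)) ->
  forall eps, 0 < eps -> exists delta, 0 < delta <= PI /\
    forall a b, 0 < a < delta -> 0 < 2 * PI - b < delta ->
      Rabs (Series (fun n => w n * J a b n) - Series (fun n => w n * F n)) < eps.
Proof.
  intros Hw HM HF HJ HJs eps Heps. pose proof PI_RGT_0.
  assert (HMs := Series_correct _ HM).
  destruct (seq_eps _ _ HMs (eps/2) ltac:(lra)) as [N HN]. specialize (HN N (le_n N)).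
  set (Sw := sum_n w N).
  assert (HSw : 0 <= Sw) by (apply sumn_nonneg; auto).
  exists (Rmin PI (eps / (4 * (Sw + 1)))).
  assert (Hq : 0 < eps / (4 * (Sw + 1))) by (apply Rdiv_lt_0_compat; lra).
  split. split. apply Rmin_glb_lt; lra. apply Rmin_l.
  intros a b Ha Hb.
  assert (Hd1 := Rmin_l PI (eps / (4 * (Sw + 1)))). assert (Hd2 := Rmin_r PI (eps / (4 * (Sw + 1)))).
  assert (Ha' : 0 < a < PI) by lra. assert (Hb' : PI < b < 2 * PI) by lra.
  set (d := a + (2 * PI - b)).
  assert (Hd : d < eps / (2 * (Sw + 1))).
  { unfold d. replace (eps / (2 * (Sw + 1))) with (2 * (eps / (4 * (Sw + 1)))) by (field; lra). lra. }
  set (u := fun n => w n * (J a b n - F n)).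
  assert (Hu : forall n, Rabs (u n) <= w n * M n).
  { intros n. unfold u. rewrite Rabs_mult, Rabs_right by (apply Rle_ge; auto).
    apply Rmult_le_compat_l; auto. apply (HJ a b n Ha' Hb'). }
  destruct (tail_bound u (fun n => w n * M n) N Hu HM) as [Hue Ht].
  assert (Heq : Series (fun n => w n * J a b n) - Series (fun n => w n * F n) = Series u).
  { rewrite <- Series_minus by auto. apply Series_ext. intros n. unfold u. ring. }
  rewrite Heq.
  assert (Hsu : Rabs (sum_n u N) <= d * Sw).
  { eapply Rle_trans. apply sumn_abs. replace (d * Sw) with (sum_n (fun n => w n * d) N) by (unfold Sw; rewrite sumn_scal_r; toR; ring).
    apply sumn_le. intros n. unfold u. rewrite Rabs_mult, Rabs_right by (apply Rle_ge; auto).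
    apply Rmult_le_compat_l; auto. apply (HJ a b n Ha' Hb'). }
  assert (Hds : d * Sw < eps / 2).
  { assert (0 <= d) by (unfold d; lra).
    apply Rle_lt_trans with (eps / (2 * (Sw + 1)) * Sw).
    apply Rmult_le_compat_r; lra.
    apply Rmult_lt_reg_r with (2 * (Sw + 1)). lra. field_simplify; lra. }
  set (s1 := sum_n u N) in *. set (s2 := sum_n (fun n => w n * M n) N) in *.
  pose proof (Rabs_triang (Series u - s1) s1) as T1.
  replace (Series u - s1 + s1) with (Series u) in T1 by ring.
  pose proof (Rle_abs (Series (fun n => w n * M n) - s2)) as T2.
  rewrite Rabs_minus_sym in HN. 
  assert (T3 : Rabs (Series u - s1) < eps / 2).
  { eapply Rle_lt_trans. exact Ht. eapply Rle_lt_trans. exact T2. exact HN. }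
  lra.
Qed.



Lemma cos_lt_1 t : 0 < t < 2 * PI -> cos t < 1.
Proof.
  intros Ht. destruct (Rle_dec t PI).
  - rewrite <- cos_0. apply cos_decreasing_1; lra.
  - rewrite <- cos_2PI. apply cos_increasing_1; lra.
Qed.

Definition Hin (xi : R) (l : Z) (phi : R) :=
  RInt (fun eta => cos (IZR l * eta) / sqrt (mu xi phi - cos eta)) 0 (2*PI).

Lemma inner_series xi l phi : 0 < xi < 1 -> cos phi < 1 ->
  Hin xi l phi = Series (fun n => cc n * Ek n l * en xi n phi).
Proof.
  intros H Hc. pose proof (mu_gt1 xi phi H Hc) as Hm. set (m := mu xi phi) in *.
  pose proof PI_RGT_0.
  assert (Hq : Rabs (/ m) < 1).
  { rewrite Rabs_right. rewrite <- Rinv_1. apply Rinv_lt_contravar; lra. left; apply Rinv_0_lt_compat; lra. }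
  destruct (is_RInt_series (fun n eta => (cc n * en xi n phi) * (cos (IZR l * eta) * cos eta ^ n))
    (fun n => (/ m) ^ n) 0 (2*PI) (fun n => (cc n * en xi n phi) * Ek n l)) as [_ HI].
  - lra.
  - intros n t _. rewrite Rabs_mult. pose proof (cc_pos n). pose proof (cc_le1 n).
    pose proof (en_bound xi n phi H).
    assert (Hen : en xi n phi <= (/ m) ^ n).
    { unfold en, Fpw. fold m. rewrite <- pow_inv.
      assert (1 <= sqrt m) by (rewrite <- sqrt_1; apply sqrt_le_1_alt; lra).
      assert (0 < / sqrt m <= 1).
      { split. apply Rinv_0_lt_compat; lra. rewrite <- Rinv_1. apply Rinv_le_contravar; lra. }
      assert (0 < (/ m) ^ n) by (apply pow_lt; apply Rinv_0_lt_compat; lra). nra. }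
    assert (Hc1 : Rabs (cos (IZR l * t) * cos t ^ n) <= 1).
    { rewrite Rabs_mult, <- RPow_abs. pose proof (COS_bound (IZR l * t)). pose proof (COS_bound t).
      assert (Rabs (cos (IZR l * t)) <= 1) by (apply Rabs_le; lra).
      assert (Rabs (cos t) <= 1) by (apply Rabs_le; lra).
      assert (Rabs (cos t) ^ n <= 1) by (apply pow_le1; split; [apply Rabs_pos|lra]).
      pose proof (Rabs_pos (cos (IZR l * t))). pose proof (pow_le _ n (Rabs_pos (cos t))). nra. }
    rewrite Rabs_right by (apply Rle_ge; apply Rmult_le_pos; lra).
    apply Rle_trans with (cc n * en xi n phi * 1). apply Rmult_le_compat_l. apply Rmult_le_pos; lra. exact Hc1. nra.
  - eexists. apply is_series_geom. exact Hq.
  - intros n. apply (is_RInt_scal (V:=R_NormedModule) (fun t => cos (IZR l * t) * cos t ^ n)).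
    exact (@RInt_correct R_CompleteNormedModule _ _ _ (ex_Ek n l)).
  - unfold Hin. fold m.
    rewrite (Series_ext (fun n => cc n * Ek n l * en xi n phi) (fun n => cc n * en xi n phi * Ek n l))
      by (intros; toR; ring).
    rewrite <- (is_RInt_unique _ _ _ _ HI). apply RInt_ext.
    intros eta Heta. rewrite Rmin_left, Rmax_right in Heta by lra.
    pose proof (COS_bound eta).
    assert (Hq2 : Rabs (cos eta / m) < 1).
    { unfold Rdiv. rewrite Rabs_mult. rewrite (Rabs_right (/ m)) by (left; apply Rinv_0_lt_compat; lra).
      assert (Rabs (cos eta) <= 1) by (apply Rabs_le; lra). pose proof (Rabs_pos (cos eta)).
      apply Rle_lt_trans with (1 * / m). apply Rmult_le_compat_r; [left; apply Rinv_0_lt_compat|]; lra.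
      rewrite Rmult_1_l. rewrite Rabs_right in Hq; [lra|]. left; apply Rinv_0_lt_compat; lra. }
    rewrite (Series_ext _ (fun n => (cos (IZR l * eta) * / sqrt m) * (cc n * (cos eta / m) ^ n))).
    2:{ intros n. unfold en, Fpw. fold m. unfold Rdiv. rewrite Rpow_mult_distr, pow_inv. toR; ring. }
    rewrite Series_scal_l. change (Series (fun n => cc n * (cos eta / m) ^ n)) with (SS (cos eta / m)).
    rewrite SS_formula by auto.
    apply Rabs_def2 in Hq2.
    assert (0 < 1 - cos eta / m) by lra.
    assert (E : sqrt (m - cos eta) = sqrt m * sqrt (1 - cos eta / m)).
    { rewrite <- sqrt_mult_alt by lra. f_equal. field. lra. }
    rewrite E. assert (0 < sqrt m) by (apply sqrt_lt_R0; lra).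
    assert (0 < sqrt (1 - cos eta / m)) by (apply sqrt_lt_R0; lra).
    toR. field. split; lra.
Qed.

Lemma cont_inner xi phi (g : R -> R) : 0 < xi < 1 -> cos phi < 1 ->
  (forall t, ex_derive g t) -> forall t, continuous (fun eta => g eta / sqrt (mu xi phi - cos eta)) t.
Proof.
  intros H Hc Hg t. pose proof (mu_gt1 xi phi H Hc). pose proof (COS_bound t).
  apply cont_der. set (m := mu xi phi) in *. auto_derive. repeat split; auto.
  - lra.
  - assert (0 < sqrt (m + - cos t)) by (apply sqrt_lt_R0; lra). lra.
Qed.

Lemma sin_inner_zero xi l phi : 0 < xi < 1 -> cos phi < 1 ->
  RInt (fun eta => sin (IZR l * eta) / sqrt (mu xi phi - cos eta)) 0 (2*PI) = 0.
Proof.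
  intros H Hc. apply RInt_refl_zero.
  - apply ex_cont. intros z _. apply (cont_inner xi phi (fun eta => sin (IZR l * eta))); auto.
    intros t. auto_derive. auto.
  - intros t. rewrite sin_refl. replace (cos (2 * PI - t)) with (cos t).
    unfold Rdiv. ring. rewrite cos_minus, cos_2PI, sin_2PI. ring.
Qed.

Lemma ex_cos_inner xi l phi : 0 < xi < 1 -> cos phi < 1 ->
  ex_RInt (fun eta => cos (IZR l * eta) / sqrt (mu xi phi - cos eta)) 0 (2*PI).
Proof.
  intros H Hc. apply ex_cont. intros z _. apply (cont_inner xi phi (fun eta => cos (IZR l * eta))); auto.
  intros t. auto_derive. auto.
Qed.

Lemma ex_sin_inner xi l phi : 0 < xi < 1 -> cos phi < 1 ->
  ex_RInt (fun eta => sin (IZR l * eta) / sqrt (mu xi phi - cos eta)) 0 (2*PI).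
Proof.
  intros H Hc. apply ex_cont. intros z _. apply (cont_inner xi phi (fun eta => sin (IZR l * eta))); auto.
  intros t. auto_derive. auto.
Qed.

Lemma inner_re k l xi phi : 0 < xi < 1 -> cos phi < 1 ->
  Defs.is_RInt (integrand_re k l xi phi) 0 (2*PI) (cos (IZR k * phi) * Hin xi l phi).
Proof.
  intros H Hc. apply to_Defs.
  replace (cos (IZR k * phi) * Hin xi l phi) with
    (cos (IZR k * phi) * RInt (fun eta => cos (IZR l * eta) / sqrt (mu xi phi - cos eta)) 0 (2*PI)
     + (- sin (IZR k * phi)) * RInt (fun eta => sin (IZR l * eta) / sqrt (mu xi phi - cos eta)) 0 (2*PI)).
  2:{ rewrite sin_inner_zero by auto. unfold Hin. ring. }
  rewrite <- (RInt_lin2 (fun eta => cos (IZR l * eta) / sqrt (mu xi phi - cos eta))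
     (fun eta => sin (IZR l * eta) / sqrt (mu xi phi - cos eta)) 0 (2*PI) _ _
     (ex_cos_inner xi l phi H Hc) (ex_sin_inner xi l phi H Hc)).
  eapply is_RInt_ext.
  2:{ apply (@RInt_correct R_CompleteNormedModule). apply ex_cont. intros z _. apply cont_der.
      pose proof (mu_gt1 xi phi H Hc). pose proof (COS_bound z). set (m := mu xi phi) in *.
      auto_derive. assert (0 < sqrt (m + - cos z)) by (apply sqrt_lt_R0; lra). repeat split; lra. }
  intros x _. unfold integrand_re. rewrite cos_plus. unfold Rdiv. toR; ring.
Qed.

Lemma inner_im k l xi phi : 0 < xi < 1 -> cos phi < 1 ->
  Defs.is_RInt (integrand_im k l xi phi) 0 (2*PI) (- sin (IZR k * phi) * Hin xi l phi).
Proof.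
  intros H Hc. apply to_Defs.
  replace (- sin (IZR k * phi) * Hin xi l phi) with
    (- sin (IZR k * phi) * RInt (fun eta => cos (IZR l * eta) / sqrt (mu xi phi - cos eta)) 0 (2*PI)
     + (- cos (IZR k * phi)) * RInt (fun eta => sin (IZR l * eta) / sqrt (mu xi phi - cos eta)) 0 (2*PI)).
  2:{ rewrite sin_inner_zero by auto. unfold Hin. ring. }
  rewrite <- (RInt_lin2 (fun eta => cos (IZR l * eta) / sqrt (mu xi phi - cos eta))
     (fun eta => sin (IZR l * eta) / sqrt (mu xi phi - cos eta)) 0 (2*PI) _ _
     (ex_cos_inner xi l phi H Hc) (ex_sin_inner xi l phi H Hc)).
  eapply is_RInt_ext.
  2:{ apply (@RInt_correct R_CompleteNormedModule). apply ex_cont. intros z _. apply cont_der.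
      pose proof (mu_gt1 xi phi H Hc). pose proof (COS_bound z). set (m := mu xi phi) in *.
      auto_derive. assert (0 < sqrt (m + - cos z)) by (apply sqrt_lt_R0; lra). repeat split; lra. }
  intros x _. unfold integrand_im. rewrite sin_plus. unfold Rdiv. toR; ring.
Qed.



Lemma Ek_le n l : Ek n l <= 2 * PI.
Proof.
  unfold Ek. pose proof PI_RGT_0.
  assert (Hb := abs_RInt_le_const (fun t => cos (IZR l * t) * cos t ^ n) 0 (2*PI) 1 ltac:(lra) (ex_Ek n l)).
  eapply Rle_trans; [apply Rle_abs|]. eapply Rle_trans; [apply Hb|lra].
  intros t _. rewrite Rabs_mult, <- RPow_abs. pose proof (COS_bound (IZR l * t)). pose proof (COS_bound t).
  assert (Rabs (cos (IZR l * t)) <= 1) by (apply Rabs_le; lra).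
  assert (Rabs (cos t) <= 1) by (apply Rabs_le; lra).
  assert (Rabs (cos t) ^ n <= 1) by (apply pow_le1; split; [apply Rabs_pos|lra]).
  pose proof (Rabs_pos (cos (IZR l * t))). pose proof (pow_le _ n (Rabs_pos (cos t))). nra.
Qed.

Lemma mu_min xi a b phi : 0 < xi < 1 -> 0 < a < PI -> PI < b < 2 * PI -> a <= phi <= b ->
  Rmin (mu xi a) (mu xi b) <= mu xi phi.
Proof.
  intros H Ha Hb Hp.
  assert (HA : 0 < / xi ^ 2 - 1) by (apply A1_pos; auto).
  assert (Hc : cos phi <= cos a \/ cos phi <= cos b).
  { destruct (Rle_dec phi PI).
    - left. apply cos_decr_1; lra.
    - right. apply cos_incr_1; lra. }
  unfold mu. destruct Hc.
  - eapply Rle_trans. apply Rmin_l. nra.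
  - eapply Rle_trans. apply Rmin_r. nra.
Qed.

Lemma outer_series xi l (T : R -> R) a b : 0 < xi < 1 -> 0 < a < PI -> PI < b < 2 * PI ->
  (forall t, continuous T t) -> (forall t, Rabs (T t) <= 1) ->
  is_series (fun n => cc n * Ek n l * RInt (fun phi => T phi * en xi n phi) a b)
    (Series (fun n => cc n * Ek n l * RInt (fun phi => T phi * en xi n phi) a b)) /\
  is_RInt (fun phi => T phi * Hin xi l phi) a b
    (Series (fun n => cc n * Ek n l * RInt (fun phi => T phi * en xi n phi) a b)).
Proof.
  intros H Ha Hb Tc Tb. pose proof PI_RGT_0.
  set (m0 := Rmin (mu xi a) (mu xi b)).
  assert (Hm0 : 1 < m0).
  { unfold m0. apply Rmin_glb_lt; apply mu_gt1; auto; apply cos_lt_1; lra. }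
  assert (Hq : Rabs (/ m0) < 1).
  { rewrite Rabs_right. rewrite <- Rinv_1. apply Rinv_lt_contravar; lra. left; apply Rinv_0_lt_compat; lra. }
  destruct (is_RInt_series (fun n phi => cc n * Ek n l * (T phi * en xi n phi))
     (fun n => 2 * PI * (/ m0) ^ n) a b
     (fun n => cc n * Ek n l * RInt (fun phi => T phi * en xi n phi) a b)) as [HS HI].
  - lra.
  - intros n t Ht. pose proof (mu_min xi a b t H Ha Hb Ht) as Hmt. fold m0 in Hmt.
    pose proof (cc_pos n). pose proof (cc_le1 n). pose proof (Ek_nonneg n l). pose proof (Ek_le n l).
    pose proof (en_bound xi n t H). pose proof (Tb t).
    assert (Hen : en xi n t <= (/ m0) ^ n).
    { unfold en, Fpw. pose proof (mu_ge1 xi t H). rewrite <- pow_inv.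
      assert (1 <= sqrt (mu xi t)) by (rewrite <- sqrt_1; apply sqrt_le_1_alt; lra).
      assert (0 < / sqrt (mu xi t) <= 1).
      { split. apply Rinv_0_lt_compat; lra. rewrite <- Rinv_1. apply Rinv_le_contravar; lra. }
      assert (Hp : (/ mu xi t) ^ n <= (/ m0) ^ n).
      { apply pow_incr. split. left; apply Rinv_0_lt_compat; lra. apply Rinv_le_contravar; lra. }
      assert (0 < (/ mu xi t) ^ n) by (apply pow_lt; apply Rinv_0_lt_compat; lra). nra. }
    rewrite !Rabs_mult. rewrite (Rabs_right (cc n)), (Rabs_right (Ek n l)), (Rabs_right (en xi n t)) by lra.
    assert (0 <= Rabs (T t) * en xi n t <= (/ m0) ^ n).
    { split. apply Rmult_le_pos; [apply Rabs_pos|lra]. apply Rle_trans with (1 * en xi n t).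
      apply Rmult_le_compat_r; lra. lra. }
    assert (0 <= cc n * Ek n l <= 2 * PI).
    { split. apply Rmult_le_pos; lra. apply Rle_trans with (1 * (2 * PI)). apply Rmult_le_compat; lra. lra. }
    apply Rmult_le_compat; lra.
  - apply ex_series_ml. eexists. apply is_series_geom. exact Hq.
  - intros n. apply (is_RInt_scal (V:=R_NormedModule) (fun phi => T phi * en xi n phi)).
    apply (@RInt_correct R_CompleteNormedModule). apply ex_cont. intros z _.
    apply cont_mult. apply Tc. apply en_cont. auto.
  - split. exact HS. eapply is_RInt_ext; [|exact HI]. intros x Hx.
    rewrite Rmin_left, Rmax_right in Hx by lra.
    rewrite inner_series by (auto; apply cos_lt_1; lra).
    rewrite <- Series_scal_l. apply Series_ext. intros n. toR; ring.
Qed.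

Lemma RInt_nonneg (e : R -> R) c d : c <= d -> ex_RInt e c d -> (forall t, 0 <= e t) -> 0 <= RInt e c d.
Proof.
  intros Hcd He Hp. apply Rle_trans with (RInt (fun _ => 0) c d).
  { rewrite RInt_const. unfold scal; simpl; unfold mult; simpl. rewrite Rmult_0_r. lra. }
  apply RInt_le. lra. apply ex_cont; intros; apply continuous_const. exact He. intros; apply Hp.
Qed.

Lemma abs_int_bound (g e : R -> R) c d : c <= d ->
  (forall t, continuous g t) -> (forall t, continuous e t) -> (forall t, Rabs (g t) <= e t) -> (forall t, e t <= 1) ->
  Rabs (RInt g c d) <= RInt e c d /\ Rabs (RInt g c d) <= d - c.
Proof.
  intros Hcd Gc Ec Hge He1.
  assert (Hg : ex_RInt g c d) by (apply ex_cont; auto).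
  assert (He : ex_RInt e c d) by (apply ex_cont; auto).
  split.
  - eapply Rle_trans. apply abs_RInt_le; auto. apply RInt_le; auto.
    apply ex_cont. intros. apply (continuous_comp g Rabs). apply Gc. apply continuous_Rabs.
  - assert (HH := abs_RInt_le_const g c d 1 Hcd Hg).
    assert (Rabs (RInt g c d) <= (d - c) * 1) by (apply HH; intros t _; eapply Rle_trans; [apply Hge| apply He1]).
    rewrite Rmult_1_r in H. exact H.
Qed.

Lemma chasles_bound (g e : R -> R) a b :
  0 < a < PI -> PI < b < 2 * PI -> (forall t, continuous g t) -> (forall t, continuous e t) ->
  (forall t, Rabs (g t) <= e t) -> (forall t, e t <= 1) ->
  Rabs (RInt g a b - RInt g 0 (2*PI)) <= RInt e 0 (2*PI) /\
  Rabs (RInt g a b - RInt g 0 (2*PI)) <= a + (2 * PI - b).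
Proof.
  intros Ha Hb Gc Ec Hge He1.
  assert (Hex : forall c d, ex_RInt g c d) by (intros; apply ex_cont; auto).
  assert (Hexe : forall c d, ex_RInt e c d) by (intros; apply ex_cont; auto).
  assert (C1 := RInt_Chasles g 0 a b (Hex _ _) (Hex _ _)).
  assert (C2 := RInt_Chasles g 0 b (2*PI) (Hex _ _) (Hex _ _)).
  assert (C3 := RInt_Chasles e 0 a b (Hexe _ _) (Hexe _ _)).
  assert (C4 := RInt_Chasles e 0 b (2*PI) (Hexe _ _) (Hexe _ _)).
  unfold plus in C1, C2, C3, C4; simpl in C1, C2, C3, C4.
  destruct (abs_int_bound g e 0 a ltac:(lra) Gc Ec Hge He1) as [B1 B2].
  destruct (abs_int_bound g e b (2*PI) ltac:(lra) Gc Ec Hge He1) as [B3 B4].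
  assert (P : 0 <= RInt e a b).
  { apply RInt_nonneg. lra. auto. intros t. eapply Rle_trans; [apply Rabs_pos|apply Hge]. }
  assert (E : RInt g a b - RInt g 0 (2*PI) = - (RInt g 0 a + RInt g b (2*PI))) by lra.
  rewrite E, Rabs_Ropp. pose proof (Rabs_triang (RInt g 0 a) (RInt g b (2*PI))).
  split; lra.
Qed.



Lemma bound_F xi n (T : R -> R) : 0 < xi < 1 -> (forall t, continuous T t) -> (forall t, Rabs (T t) <= 1) ->
  Rabs (RInt (fun phi => T phi * en xi n phi) 0 (2*PI)) <= RInt (en xi n) 0 (2*PI).
Proof.
  intros H Tc Tb. pose proof PI_RGT_0.
  apply (abs_int_bound (fun phi => T phi * en xi n phi) (en xi n) 0 (2*PI)).
  - lra.
  - intros t. apply cont_mult. apply Tc. apply en_cont; auto.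
  - intros t. apply en_cont; auto.
  - intros t. pose proof (en_bound xi n t H). pose proof (Tb t). rewrite Rabs_mult, (Rabs_right (en xi n t)) by lra.
    apply Rle_trans with (1 * en xi n t). apply Rmult_le_compat_r; lra. lra.
  - intros t. pose proof (en_bound xi n t H). lra.
Qed.

Lemma ex_wF xi l (T : R -> R) : 0 < xi < 1 -> (forall t, continuous T t) -> (forall t, Rabs (T t) <= 1) ->
  ex_series (fun n => cc n * Ek n l * RInt (fun phi => T phi * en xi n phi) 0 (2*PI)).
Proof.
  intros H Tc Tb.
  apply (ex_series_le (fun n => cc n * Ek n l * RInt (fun phi => T phi * en xi n phi) 0 (2*PI))
           (fun n => cc n * Ek n l * RInt (en xi n) 0 (2*PI))).
  - intros n. change (norm (cc n * Ek n l * RInt (fun phi => T phi * en xi n phi) 0 (2*PI)))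
      with (Rabs (cc n * Ek n l * RInt (fun phi => T phi * en xi n phi) 0 (2*PI))).
    pose proof (cc_pos n). pose proof (Ek_nonneg n l).
    rewrite Rabs_mult, (Rabs_right (cc n * Ek n l)) by (apply Rle_ge, Rmult_le_pos; lra).
    apply Rmult_le_compat_l. apply Rmult_le_pos; lra. apply bound_F; auto.
  - apply ex_series_wM; auto.
Qed.

Lemma iter_general xi l (T : R -> R) (f : R -> R -> R) :
  0 < xi < 1 -> (forall t, continuous T t) -> (forall t, Rabs (T t) <= 1) ->
  (forall phi, 0 < phi < 2 * PI -> Defs.is_RInt (f phi) 0 (2*PI) (T phi * Hin xi l phi)) ->
  iter_int f (Series (fun n => cc n * Ek n l * RInt (fun phi => T phi * en xi n phi) 0 (2*PI))).
Proof.
  intros H Tc Tb Hf.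
  exists (fun phi => T phi * Hin xi l phi). split; [exact Hf|].
  intros eps Heps.
  destruct (tannery (fun n => cc n * Ek n l) (fun n => RInt (en xi n) 0 (2*PI))
     (fun n => RInt (fun phi => T phi * en xi n phi) 0 (2*PI))
     (fun a b n => RInt (fun phi => T phi * en xi n phi) a b)) with (eps := eps) as [delta [Hd Hdd]]; auto.
  - intros n. pose proof (cc_pos n). pose proof (Ek_nonneg n l). apply Rmult_le_pos; lra.
  - apply ex_series_wM; auto.
  - apply ex_wF; auto.
  - intros a b n Ha Hb.
    apply (chasles_bound (fun phi => T phi * en xi n phi) (en xi n) a b Ha Hb).
    + intros t. apply cont_mult. apply Tc. apply en_cont; auto.
    + intros t. apply en_cont; auto.
    + intros t. pose proof (en_bound xi n t H). pose proof (Tb t). rewrite Rabs_mult, (Rabs_right (en xi n t)) by lra.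
      apply Rle_trans with (1 * en xi n t). apply Rmult_le_compat_r; lra. lra.
    + intros t. pose proof (en_bound xi n t H). lra.
  - intros a b Ha Hb. destruct (outer_series xi l T a b H Ha Hb Tc Tb) as [HS _]. eexists; exact HS.
  - exists delta. split. lra. intros a b Ha Hb.
    assert (Ha' : 0 < a < PI) by lra. assert (Hb' : PI < b < 2 * PI) by lra.
    destruct (outer_series xi l T a b H Ha' Hb' Tc Tb) as [_ HI].
    eexists. split. apply to_Defs. exact HI. apply Hdd; auto.
Qed.

Lemma en_refl xi n t : en xi n (2 * PI - t) = en xi n t.
Proof.
  unfold en, Fpw, mu. replace (cos (2 * PI - t)) with (cos t). reflexivity.
  rewrite cos_minus, cos_2PI, sin_2PI. ring.
Qed.

Theorem mainTheorem5 (k l : Z) (xi : R) (Hxi : 0 < xi < 1) :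
  exists re : R,
    iter_int (integrand_re k l xi) re /\ 0 < re /\
    iter_int (integrand_im k l xi) 0.
Proof.
  assert (Tc1 : forall t, continuous (fun phi => cos (IZR k * phi)) t).
  { intros t. apply cont_der. auto_derive. auto. }
  assert (Tb1 : forall t, Rabs (cos (IZR k * t)) <= 1).
  { intros t. pose proof (COS_bound (IZR k * t)). apply Rabs_le; lra. }
  assert (Tc2 : forall t, continuous (fun phi => - sin (IZR k * phi)) t).
  { intros t. apply cont_der. auto_derive. auto. }
  assert (Tb2 : forall t, Rabs (- sin (IZR k * t)) <= 1).
  { intros t. pose proof (SIN_bound (IZR k * t)). rewrite Rabs_Ropp. apply Rabs_le; lra. }
  exists (Series (fun n => cc n * Ek n l * RInt (fun phi => cos (IZR k * phi) * en xi n phi) 0 (2*PI))).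
  split; [|split].
  - apply (iter_general xi l (fun phi => cos (IZR k * phi))); auto.
    intros phi Hphi. apply inner_re; auto. apply cos_lt_1; auto.
  - eapply Rlt_le_trans; [|apply (series_ge_term _ (Z.abs_nat l))].
    + apply Rmult_lt_0_compat. apply Rmult_lt_0_compat. apply cc_pos. apply Ek_abs. apply en_pos; auto.
    + intros n. pose proof (cc_pos n). pose proof (Ek_nonneg n l). pose proof (en_pos xi n k Hxi).
      apply Rmult_le_pos; [apply Rmult_le_pos|]; lra.
    + apply ex_wF; auto.
  - assert (Z0 : Series (fun n => cc n * Ek n l * RInt (fun phi => - sin (IZR k * phi) * en xi n phi) 0 (2*PI)) = 0).
    { rewrite (Series_ext _ (fun n => 0 * cc n)).
      - rewrite Series_scal_l. ring.
      - intros n. rewrite RInt_refl_zero. toR; ring.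
        + apply ex_cont. intros z _. apply cont_mult. apply Tc2. apply en_cont; auto.
        + intros t. rewrite sin_refl, en_refl. ring. }
    rewrite <- Z0. apply (iter_general xi l (fun phi => - sin (IZR k * phi))); auto.
    intros phi Hphi. apply inner_im; auto. apply cos_lt_1; auto.
Qed.
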